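(* Let $T$ be a DAT with duration vector $d$, and let $v$ be a module of $T$. Let $T^v$ be the DAT obtained from $T$ by deleting all nodes of $T_v$ other than $v$ (together with their incident edges) and turning $v$ into a new leaf $\tilde v$ of type $\mathtt{BAS}$ (keeping its incoming edges and its position in the child orderings of its $\mathtt{SAND}$-parents). Define the duration vector $d^v$ on the BASes of $T^v$ by $d^v_a=d_a$ for $a\in N_{\mathtt{BAS}}\setminus B_v$ and $d^v_{\tilde v}=\mathrm{mt}(T_v,d|_{B_v})$ (where, if this value is $\infty$, one uses the convention that $\mathrm{t}(\mathcal{O},d^v)=\infty$ for any attack $\mathcal{O}$ containing $\tilde v$). Then $$\mathrm{mt}(T,d)=\mathrm{mt}(T^v,d^v).$$
   Context: A dynamic attack tree (DAT) is a finite rooted directed acyclic graph $T=(N,E)$ (edges point from a node to its children) with root $\mathrm{R}_T$, in which each node $v$ has a type $\gamma(v)\in\{\mathtt{BAS},\mathtt{OR},\mathtt{AND},\mathtt{SAND}\}$, with $\gamma(v)=\mathtt{BAS}$ if and only if $v$ is a leaf. Every node of type $\mathtt{SAND}$ comes with a fixed linear ordering $v_1,\dots,v_n$ of its children, written $v=\mathtt{SAND}(v_1,\dots,v_n)$; similarly one writes $v=\mathtt{OR}(v_1,\dots,v_n)$, $v=\mathtt{AND}(v_1,\dots,v_n)$. $N_\gamma$ denotes the set of nodes of type $\gamma$. For a node $v$, $T_v$ is the sub-DAG induced on the descendants of $v$ (all nodes reachable from $v$ by a directed path, including $v$), rooted at $v$, with the inherited types and orderings, and $B_v$ is the set of nodes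 of $T_v$ of type $\mathtt{BAS}$. A module of $T$ is a node $v\in N\setminus N_{\mathtt{BAS}}$ such that every directed path from a node outside $T_v$ to a node of $T_v$ passes through $v$; equivalently, every node of $T_v$ other than $v$ has all its parents inside $T_v$. An attack on $T$ is a pair $\mathcal{O}=(A,\prec)$ where $A\subseteq N_{\mathtt{BAS}}$ and $\prec$ is a strict partial order on $A$. An attack $(A,\prec)$ reaches a node $v$, defined recursively: if $v\in N_{\mathtt{BAS}}$, iff $v\in A$; if $v=\mathtt{OR}(v_1,\dots,v_n)$, iff it reaches some $v_i$; if $v=\mathtt{AND}(v_1,\dots,v_n)$, iff it reaches all $v_i$; if $v=\mathtt{SAND}(v_1,\dots,v_n)$, iff it reaches all $v_i$ and for every $i<n$, every $a\in A\cap B_{v_i}$ and every $a'\in A\cap B_{v_{i+1}}$ one has $a\prec a'$. An attack is successful if it reaches $\mathrm{R}_T$; $\mathcal{S}_T$ is the set of successful attacks. A duration vector is $d\in\mathbb{R}_{\ge0}^{N_{\mathtt{BAS}}}$. For an attack $\mathcal{O}=(A,\prec)$, $\mathrm{t}(\mathcal{O},d)=\max_C\sum_{a\in C}d_a$, the maximum over all maximal chains $C$ of $(A,\prec)$ (equal to $0$ if $A=\varnothing$). The min time is $\mathrm{mt}(T,d)=\min_{\mathcal{O}\in\mathcal{S}_T}\mathrm{t}(\mathcal{O},d)$, which is $\infty$ if $\mathcal{S}_T=\varnothing$. *)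

(* Defs.v *)
From HB Require Import structures.
From mathcomp Require Import all_boot all_order all_algebra.
From mathcomp Require Import reals constructive_ereal.
Set Implicit Arguments. Unset Strict Implicit. Unset Printing Implicit Defensive.
Import Order.TTheory GRing.Theory Num.Theory.

Inductive gate := BAS | OR | AND | SAND.
Definition is_bas (g : gate) : bool := if g is BAS then true else false.

(* A DAT over a finite type of nodes N: the children of a node are given as a
   sequence (for SAND nodes this is the fixed ordering v_1,...,v_n). *)
Record dat (N : finType) := Dat { ch : N -> seq N; typ : N -> gate; root : N }.

Section DAT.
Variable N : finType.
Variable T : dat N.

Definition edge : rel N := fun x y => y \in ch T x.
Definition desc (x y : N) : bool := connect edge x y.

Definition wf_dat : Prop :=
  [/\ (forall x y, edge x y -> ~~ desc y x),
      (forall x, desc (root T) x),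
      (forall x, uniq (ch T x))
    & (forall x, is_bas (typ T x) = (ch T x == [::]))].

Definition Bset (w : N) : {set N} := [set x | desc w x & is_bas (typ T x)].

(* An attack (A, prec), with prec encoded as a set of pairs. *)
Definition attack := ({set N} * {set N * N})%type.

Definition is_attack (O : attack) : bool :=
  [&& O.1 \subset [set x | is_bas (typ T x)],
      [forall p in O.2, (p.1 \in O.1) && (p.2 \in O.1)],
      [forall a, (a, a) \notin O.2] &
      [forall a, forall b, forall c,
         ((a, b) \in O.2) && ((b, c) \in O.2) ==> ((a, c) \in O.2)]].

Definition sand_rel (O : attack) (x y : N) : bool :=
  [forall a, forall a',
     [&& a \in O.1, a \in Bset x, a' \in O.1 & a' \in Bset y] ==> ((a, a') \in O.2)].

(* reaching, by recursion with fuel; fuel #|N| is enough in a DAG *)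
Fixpoint reachf (O : attack) (k : nat) (v : N) : bool :=
  match k with
  | 0 => false
  | k'.+1 =>
    match typ T v with
    | BAS => v \in O.1
    | OR => has (reachf O k') (ch T v)
    | AND => all (reachf O k') (ch T v)
    | SAND => all (reachf O k') (ch T v) && sorted (sand_rel O) (ch T v)
    end
  end.

Definition reaches (O : attack) (v : N) : bool := reachf O #|N| v.

Definition successful (O : attack) : bool := is_attack O && reaches O (root T).

Definition is_chain (O : attack) (C : {set N}) : bool :=
  (C \subset O.1) &&
  [forall a in C, forall b in C, (a != b) ==> (((a, b) \in O.2) || ((b, a) \in O.2))].

Definition is_maxchain (O : attack) (C : {set N}) : bool :=
  is_chain O C && [forall C' : {set N}, is_chain O C' ==> ~~ (C \proper C')].

Local Open Scope ereal_scope.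
Variable R : realType.

(* durations may be +oo (needed for d^v); t(O,d) = max over maximal chains *)
Definition attack_time (O : attack) (d : N -> \bar R) : \bar R :=
  \big[Order.max/-oo]_(C : {set N} | is_maxchain O C) (\sum_(a in C) d a).

Definition min_time (d : N -> \bar R) : \bar R :=
  \big[Order.min/+oo]_(O : attack | successful O) attack_time O d.

Definition is_module (v : N) : Prop :=
  ~~ is_bas (typ T v) /\
  (forall x p, desc v x -> x != v -> edge p x -> desc v p).

End DAT.

Section Constructions.
Variable N : finType.
Variable T : dat N.
Variable v : N.

Definition subN := {x : N | desc T v x}.
Definition sub_root : subN := exist _ v (connect0 _ v).
Definition subdat : dat subN :=
  Dat (fun x : subN => pmap insub (ch T (val x)))
      (fun x : subN => typ T (val x)) sub_root.

Definition keep (x : N) : bool := (x == v) || ~~ desc T v x.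
Definition quotN := {x : N | keep x}.
Lemma keep_v : keep v. Proof. by rewrite /keep eqxx. Qed.
Definition vtilde : quotN := exist _ v keep_v.
Definition quotdat : dat quotN :=
  Dat (fun x : quotN => if val x == v then [::] else pmap insub (ch T (val x)))
      (fun x : quotN => if val x == v then BAS else typ T (val x))
      (insubd vtilde (root T)).

Variable R : realType.
Local Open Scope ereal_scope.
Definition quotdur (d : N -> R) : quotN -> \bar R :=
  fun x => if val x == v then min_time (subdat) (fun y : subN => (d (val y))%:E)
           else (d (val x))%:E.
End Constructions.

Arguments subdat {N} T v.
Arguments quotdat {N} T v.
Arguments quotdur {N} T v {R} d _.

(* Main.v *)
Require Import Defs.
From HB Require Import structures.
From mathcomp Require Import all_boot all_order all_algebra.
From mathcomp Require Import reals constructive_ereal.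
Set Implicit Arguments. Unset Strict Implicit. Unset Printing Implicit Defensive.
Import Order.TTheory GRing.Theory Num.Theory.

Section Gen.
Variable N : finType.
Variable T : dat N.

Definition rbody (f : N -> bool) (O : attack N) (u : N) : bool :=
  match typ T u with
  | BAS => u \in O.1
  | OR => has f (ch T u)
  | AND => all f (ch T u)
  | SAND => all f (ch T u) && sorted (sand_rel T O) (ch T u)
  end.

Lemma reachf_S O k u : reachf T O k.+1 u = rbody (reachf T O k) O u.
Proof. by []. Qed.

Lemma rbody_mono (f g : N -> bool) O u :
  (forall c, c \in ch T u -> f c -> g c) -> rbody f O u -> rbody g O u.
Proof.
move=> H; rewrite /rbody; case: (typ T u) => //.
- by move/hasP=> [c Hc fc]; apply/hasP; exists c => //; apply: H.
- by move/allP=> Ha; apply/allP=> c Hc; apply: H => //; apply: Ha.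
- by case/andP=> /allP Ha ->; rewrite andbT; apply/allP=> c Hc; apply: H => //; apply: Ha.
Qed.

Lemma reachf_mono O k u : reachf T O k u -> reachf T O k.+1 u.
Proof.
elim: k u => [|k IH] u //.
rewrite reachf_S [reachf _ _ k.+2 _]reachf_S.
by apply: rbody_mono => c _; apply: IH.
Qed.

Lemma reachf_monoD O k j u : reachf T O k u -> reachf T O (k + j) u.
Proof. elim: j => [|j IH]; first by rewrite addn0. by rewrite addnS => /IH /reachf_mono. Qed.

Lemma desc_edge x y : edge T x y -> desc T x y.
Proof. by move=> e; apply: connect1. Qed.

Lemma desc_trans x y z : desc T x y -> desc T y z -> desc T x z.
Proof. exact: connect_trans. Qed.

Lemma Bset_trans x y a : desc T x y -> a \in Bset T y -> a \in Bset T x.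
Proof.
by move=> dxy; rewrite !inE => /andP[dya ->]; rewrite andbT (desc_trans dxy dya).
Qed.

Lemma desc_refl x : desc T x x.
Proof. exact: connect0. Qed.

Hypothesis acyc : forall x y, edge T x y -> ~~ desc T y x.

Lemma desc_antisym x y : desc T x y -> desc T y x -> x = y.
Proof.
move/connectP=> [[|z p] /= Hp Hy]; first by [].
case/andP: Hp => Exz Hp dyx.
have dzy : desc T z y by apply/connectP; exists p.
by move: (acyc Exz); rewrite (desc_trans dzy dyx).
Qed.

Definition rk (u : N) := #|[set x | desc T u x]|.

Lemma rk_lt u c : edge T u c -> rk c < rk u.
Proof.
move=> e; apply: proper_card; apply/properP; split.
  by apply/subsetP=> x; rewrite !inE => dcx; apply: desc_trans (desc_edge e) dcx.
by exists u; rewrite !inE ?desc_refl // acyc.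
Qed.

Lemma rk_gt0 u : 0 < rk u.
Proof. by rewrite /rk card_gt0; apply/set0Pn; exists u; rewrite inE desc_refl. Qed.

Lemma reachf_stab O k u : rk u <= k -> reachf T O k.+1 u = reachf T O k u.
Proof.
elim: k u => [|k IH] u.
  by rewrite leqn0 => /eqP r0; move: (rk_gt0 u); rewrite r0.
move=> ru; rewrite reachf_S [reachf _ _ k.+1 _]reachf_S /rbody.
have H : {in ch T u, reachf T O k.+1 =1 reachf T O k}.
  move=> c Hc; apply: IH; have := rk_lt (Hc : edge T u c); move: ru.
  by move=> a b; rewrite -ltnS; apply: leq_trans b a.
by case: (typ T u) => //; rewrite ?(eq_in_has H) ?(eq_in_all H).
Qed.

Lemma reachf_rk O k u : rk u <= k -> reachf T O k u = reachf T O (rk u) u.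
Proof.
move=> /subnKC <-; elim: (k - rk u) => [|j IH]; first by rewrite addn0.
by rewrite addnS reachf_stab ?IH // leq_addr.
Qed.

Lemma rk_le u : rk u <= #|N|.
Proof. exact: max_card. Qed.

Lemma reaches_fuel O k u : #|N| <= k -> reachf T O k u = reaches T O u.
Proof.
move=> Hk; rewrite /reaches (reachf_rk _ (leq_trans (rk_le u) Hk)).
by rewrite (reachf_rk _ (rk_le u)).
Qed.

Lemma reachesE O u : reaches T O u = rbody (reaches T O) O u.
Proof. by rewrite -(reaches_fuel _ _ (leqnSn _)). Qed.

Lemma reachf_reaches O k u : reachf T O k u -> reaches T O u.
Proof. by move/(reachf_monoD #|N|); rewrite reaches_fuel // leq_addl. Qed.


Hypothesis leafb : forall x, is_bas (typ T x) = (ch T x == [::]).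

Lemma reach_nonempty O u : reaches T O u -> exists a, (a \in O.1) && (a \in Bset T u).
Proof.
rewrite /reaches; elim: #|N| u => [|k IH] u //.
rewrite reachf_S /rbody.
have nb : ~~ is_bas (typ T u) -> exists c, c \in ch T u.
  rewrite leafb; case: (ch T u) => [|c s] //= _; exists c; exact: mem_head.
have lift c a : c \in ch T u -> a \in Bset T c -> a \in Bset T u.
  by move=> Hc; apply: Bset_trans; apply: desc_edge.
case E: (typ T u).
- by move=> Hu; exists u; rewrite Hu !inE desc_refl E.
- move/hasP=> [c Hc /IH [a /andP[Ha Hb]]]; exists a; rewrite Ha /=; exact: lift Hb.
- move/allP=> Ha; have [c Hc] : exists c, c \in ch T u by apply: nb; rewrite E.
  have [a /andP[H1 H2]] := IH _ (Ha _ Hc); exists a; rewrite H1; exact: lift H2.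
- case/andP=> /allP Ha _; have [c Hc] : exists c, c \in ch T u by apply: nb; rewrite E.
  have [a /andP[H1 H2]] := IH _ (Ha _ Hc); exists a; rewrite H1; exact: lift H2.
Qed.

End Gen.

Section Time.
Variable N : finType.
Variable T : dat N.
Variable R : realType.
Local Open Scope ereal_scope.

Lemma chain0 (O : attack N) : is_chain O set0.
Proof. by rewrite /is_chain sub0set; apply/forallP=> a; rewrite inE. Qed.

Lemma AT_ge (O : attack N) (d : N -> \bar R) C :
  (forall a, a \in O.1 -> 0 <= d a) -> is_chain O C ->
  \sum_(a in C) d a <= attack_time O d.
Proof.
move=> d0 HC.
pose P := fun C' => is_chain O C' && (C \subset C').
have PC : P C by rewrite /P HC subxx.
case: (arg_maxnP (fun C' : {set N} => #|C'|) PC) => C' /andP[HC' sub] Hmax.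
have mC' : is_maxchain O C'.
  rewrite /is_maxchain HC' /=; apply/forallP=> C2; apply/implyP=> H2.
  apply/negP=> pr; have := Hmax C2; rewrite /P H2 (subset_trans sub (proper_sub pr)) /=.
  by move=> /(_ isT); rewrite leqNgt proper_card.
apply: (@le_trans _ _ (\sum_(a in C') d a)).
  apply: lee_sum_nneg_subset; first by move=> x; apply/subsetP.
  move=> x; rewrite !inE => /andP[_ xC']; apply: d0.
  by move: HC' => /andP[/subsetP + _]; apply.
rewrite /attack_time; exact: (le_bigmax_cond _ _ mC').
Qed.

Lemma AT_nonneg (O : attack N) (d : N -> \bar R) :
  (forall a, a \in O.1 -> 0 <= d a) -> 0 <= attack_time O d.
Proof. by move=> d0; have := AT_ge d0 (chain0 O); rewrite big_set0. Qed.

Lemma AT_witness (O : attack N) (d : N -> \bar R) :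
  (forall a, a \in O.1 -> 0 <= d a) ->
  exists C, is_maxchain O C /\ attack_time O d = \sum_(a in C) d a.
Proof.
move=> d0.
have : (fun x => x = -oo \/ exists C, is_maxchain O C /\ x = \sum_(a in C) d a) (attack_time O d).
  rewrite /attack_time; apply: (big_ind (fun x => x = -oo \/ exists C, is_maxchain O C /\ x = \sum_(a in C) d a)) => [|x y Hx Hy|C HC]; first by left.
    by rewrite maxEle; case: ifP.
  by right; exists C.
case=> // H; move: (AT_nonneg d0); rewrite H.
by [].
Qed.

Lemma AT_le (O : attack N) (d : N -> \bar R) t :
  (forall C, is_maxchain O C -> \sum_(a in C) d a <= t) -> attack_time O d <= t.
Proof. by move=> H; apply/bigmax_leP; split => //; apply: leNye. Qed.

Lemma MT_le (d : N -> \bar R) O : successful T O -> min_time T d <= attack_time O d.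
Proof. by move=> H; apply: (bigmin_le_cond _ (fun O => attack_time O d) H). Qed.

Lemma MT_ge (d : N -> \bar R) t :
  (forall O, successful T O -> t <= attack_time O d) -> t <= min_time T d.
Proof. by move=> H; apply/bigmin_geP; split => //; apply: leey. Qed.

Lemma MT_witness (d : N -> \bar R) : min_time T d != +oo ->
  exists O, successful T O /\ min_time T d = attack_time O d.
Proof.
have : (fun x => x = +oo \/ exists O, successful T O /\ x = attack_time O d) (min_time T d).
  rewrite /min_time; apply: (big_ind (fun x => x = +oo \/ exists O, successful T O /\ x = attack_time O d)) => [|x y Hx Hy|O HO]; first by left.
    by rewrite minEle; case: ifP.
  by right; exists O.
by case=> [->|//]; rewrite eqxx.
Qed.

Lemma MT_nonneg (d : N -> \bar R) :
  (forall a, is_bas (typ T a) -> 0 <= d a) -> 0 <= min_time T d.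
Proof.
move=> d0; apply: MT_ge => O /andP[/and4P[/subsetP sub _ _ _] _].
by apply: AT_nonneg => a /sub; rewrite inE; apply: d0.
Qed.

End Time.

Lemma map_val_pmap (X : Type) (P : pred X) (sT : subType P) (s : seq X) :
  map val (pmap (insub : X -> option sT) s) = filter P s.
Proof.
elim: s => [|x s IH] //=; case: insubP => [u Px Hu|nPx] /=.
  by rewrite Px Hu IH.
by rewrite (negbTE nPx).
Qed.

Lemma connect_homo (T1 T2 : finType) (e1 : rel T1) (e2 : rel T2) (f : T1 -> T2) :
  (forall x y, e1 x y -> e2 (f x) (f y)) ->
  forall x y, connect e1 x y -> connect e2 (f x) (f y).
Proof.
move=> H x y /connectP[p Hp ->]; elim: p x Hp => [|z p IH] x /=.
  by move=> _; apply: connect0.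
case/andP=> e Hp; apply: connect_trans (connect1 (H _ _ e)) (IH _ Hp).
Qed.

Lemma chainP (N : finType) (O : attack N) (C : {set N}) : is_chain O C ->
  (forall a, a \in C -> a \in O.1) /\
  (forall a b, a \in C -> b \in C -> a != b -> ((a,b) \in O.2) || ((b,a) \in O.2)).
Proof.
case/andP=> /subsetP H1 /forallP H2; split=> // a b Ha Hb ab.
by have /implyP := H2 a => /(_ Ha) /forallP /(_ b) /implyP /(_ Hb) /implyP; apply.
Qed.

Lemma chainI (N : finType) (O : attack N) (C : {set N}) :
  (forall a, a \in C -> a \in O.1) ->
  (forall a b, a \in C -> b \in C -> a != b -> ((a,b) \in O.2) || ((b,a) \in O.2)) ->
  is_chain O C.
Proof.
move=> H1 H2; apply/andP; split; first by apply/subsetP.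
apply/forallP=> a; apply/implyP=> Ha; apply/forallP=> b; apply/implyP=> Hb.
by apply/implyP; apply: H2.
Qed.

Section Att.
Variable N : finType.
Variable T : dat N.
Variable O : attack N.
Hypothesis HO : is_attack T O.
Lemma att1 a : a \in O.1 -> is_bas (typ T a).
Proof. by case/and4P: HO => /subsetP H _ _ _ /H; rewrite inE. Qed.
Lemma att3 a : (a,a) \notin O.2.
Proof. by case/and4P: HO => _ _ /forallP H _; apply: H. Qed.
Lemma att4 a b c : (a,b) \in O.2 -> (b,c) \in O.2 -> (a,c) \in O.2.
Proof.
case/and4P: HO => _ _ _ /forallP /(_ a) /forallP /(_ b) /forallP /(_ c) /implyP H h1 h2.
by apply: H; rewrite h1 h2.
Qed.
Lemma att2 a b : (a,b) \in O.2 -> (a \in O.1) && (b \in O.1).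
Proof. by case/and4P: HO => _ /forallP /(_ (a,b)) /implyP H _ _; apply: H. Qed.
End Att.

Section Graph.
Variable N : finType.
Variable T : dat N.
Variable v : N.
Hypothesis wf : wf_dat T.
Hypothesis modv : is_module T v.

Local Notation T' := (quotdat T v).
Local Notation S := (subdat T v).
Local Notation qN := (quotN T v).
Local Notation sN := (subN T v).
Local Notation vt := (vtilde T v).

Lemma acycT : forall x y, edge T x y -> ~~ desc T y x.
Proof. by case: wf. Qed.

Lemma leafT : forall x, is_bas (typ T x) = (ch T x == [::]).
Proof. by case: wf. Qed.

Lemma rootT : forall x, desc T (Defs.root T) x.
Proof. by case: wf. Qed.

Lemma v_notbas : ~~ is_bas (typ T v).
Proof. by case: modv. Qed.

Lemma module_step x p : desc T v x -> x != v -> edge T p x -> desc T v p.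
Proof. by case: modv => _; apply. Qed.

Lemma keepE x : keep T v x = (x == v) || ~~ desc T v x.
Proof. by []. Qed.

Lemma keep_desc x : keep T v x -> desc T v x -> x = v.
Proof. by rewrite keepE => /orP[/eqP //|/negbTE ->]. Qed.

Lemma val_vt : val vt = v.
Proof. by []. Qed.

Lemma eq_vt (x : qN) : (x == vt) = (val x == v).
Proof. by []. Qed.

Lemma ch_keep (u : qN) c : val u != v -> c \in ch T (val u) -> keep T v c.
Proof.
move=> uv Hc; rewrite keepE; case: (c =P v) => //= cv.
apply/negP=> dvc; have := module_step dvc (introN eqP cv) Hc.
by move/(keep_desc (valP u)); apply/eqP.
Qed.

Lemma chQ (u : qN) : val u != v -> ch T (val u) = map val (ch T' u).
Proof.
move=> uv; rewrite /= (negbTE uv) map_val_pmap.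
by apply/esym/all_filterP/allP => c; apply: ch_keep.
Qed.

Lemma typQ (u : qN) : val u != v -> typ T' u = typ T (val u).
Proof. by move=> uv; rewrite /= (negbTE uv). Qed.

Lemma typQv : typ T' vt = BAS.
Proof. by rewrite /= eqxx. Qed.

Lemma edgeQ (x y : qN) : edge T' x y -> (val x != v) && edge T (val x) (val y).
Proof.
rewrite /edge /=; case: ifP => //= _.
by rewrite mem_pmap_sub.
Qed.

Lemma descQ (x y : qN) : desc T' x y -> desc T (val x) (val y).
Proof. by apply: connect_homo => a b /edgeQ /andP[]. Qed.

Lemma acycQ : forall x y : qN, edge T' x y -> ~~ desc T' y x.
Proof.
move=> x y /edgeQ /andP[_ e]; apply/negP => /descQ d.
by move: (acycT e); rewrite d.
Qed.

Lemma desc_vv_path p : path (edge T) v p -> last v p = v -> p = [::].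
Proof.
case: p => [|w p] //= /andP[e Hp] L.
have : desc T w v by apply/connectP; exists p => //; rewrite L.
by move: (acycT e) => /negbTE ->.
Qed.

Lemma lift_pathQ p : forall x : qN, path (edge T) (val x) p ->
  keep T v (last (val x) p) -> (val x != v) || (p == [::]) ->
  desc T' x (insubd x (last (val x) p)).
Proof.
elim: p => [|z p IH] x /=.
  by move=> _ _ _; rewrite valKd; apply: connect0.
case/andP=> e Hp kL hx.
have xv : val x != v by move: hx; rewrite orbF.
have dzL : desc T z (last z p) by apply/connectP; exists p.
have kz : keep T v z.
  rewrite keepE; case: (z =P v) => //= zv; apply/negP => dvz.
  have dvL := desc_trans dvz dzL.
  have Lv := keep_desc kL dvL; rewrite Lv in dzL.
  by apply: zv; exact: (desc_antisym (@acycT) dzL dvz).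
pose z' : qN := Sub z kz.
have ez : edge T' x z' by rewrite /edge /= (negbTE xv) mem_pmap_sub.
have hz : (val z' != v) || (p == [::]).
  case: (z =P v) => [zv|/eqP //]; rewrite /= zv in Hp kL *.
  apply/eqP; apply: desc_vv_path (Hp) _.
  by apply: (keep_desc kL); rewrite -zv.
have H1 : desc T' z' (insubd z' (last z p)) := IH z' Hp kL hz.
have -> : insubd x (last z p) = insubd z' (last z p) by apply: val_inj; rewrite !insubdK.
exact: connect_trans (connect1 ez) H1.
Qed.

Lemma descQ_bwd (x : qN) y : keep T v y -> desc T (val x) y -> desc T' x (insubd x y).
Proof.
move=> ky /connectP[p Hp Ly]; rewrite Ly; apply: lift_pathQ => //; first by rewrite -Ly.
case: (val x =P v) => [xv|] /=; last by move/eqP.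
rewrite xv in Hp Ly *; apply/eqP; apply: desc_vv_path (Hp) _.
by rewrite -Ly; apply: (keep_desc ky); rewrite /desc; apply/connectP; exists p.
Qed.

Lemma BQ_fwd (x a : qN) : a \in Bset T' x ->
  desc T (val x) (val a) /\ (val a != v -> is_bas (typ T (val a))).
Proof.
rewrite inE => /andP[/descQ d b]; split=> // av.
by rewrite typQ // in b.
Qed.

Lemma BQ_bwd (x a : qN) : desc T (val x) (val a) ->
  (val a != v -> is_bas (typ T (val a))) -> a \in Bset T' x.
Proof.
move=> d b; rewrite inE; have := descQ_bwd (valP a) d; rewrite valKd => ->.
by case: (val a =P v) => [av|/eqP av]; [rewrite /= av eqxx | rewrite typQ // b].
Qed.

Lemma entry x a : keep T v x -> desc T x a -> desc T v a -> desc T x v.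
Proof.
move=> kx /connectP[p Hp ->]; elim: p x kx Hp => [|z p IH] x kx /=.
  by move=> _ dvx; rewrite (keep_desc kx dvx); apply: desc_refl.
case/andP=> e Hp dvL.
case: (x =P v) => [->|/eqP xv]; first exact: desc_refl.
case: (z =P v) => [zv|/eqP zv]; first by rewrite -zv; apply: desc_edge.
have kz : keep T v z.
  rewrite keepE (negbTE zv) /=; apply/negP => dvz.
  move: (module_step dvz zv e); move: kx; rewrite keepE (negbTE xv) /= => /negP H /H //.
exact: desc_trans (desc_edge e) (IH z kz Hp dvL).
Qed.

Lemma edgeS (x y : sN) : edge S x y = edge T (val x) (val y).
Proof. by rewrite /edge /= mem_pmap_sub. Qed.

Lemma descS (x y : sN) : desc S x y -> desc T (val x) (val y).
Proof. by apply: connect_homo => a b; rewrite edgeS. Qed.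

Lemma descS_bwd (x y : sN) : desc T (val x) (val y) -> desc S x y.
Proof.
move=> /connectP[p Hp Ly].
elim: p x Hp Ly => [|z p IH] x /=.
  by move=> _ yx; rewrite (val_inj yx); apply: desc_refl.
case/andP=> e Hp Ly.
have dz : desc T v z := desc_trans (valP x) (desc_edge e).
pose z' : sN := Sub z dz.
have ez : edge S x z' by rewrite edgeS.
exact: connect_trans (connect1 ez) (IH z' Hp Ly).
Qed.

Lemma acycS : forall x y : sN, edge S x y -> ~~ desc S y x.
Proof.
move=> x y; rewrite edgeS => e; apply/negP => /descS d.
by move: (acycT e); rewrite d.
Qed.

Lemma BS (x a : sN) : (a \in Bset S x) = (val a \in Bset T (val x)).
Proof.
rewrite !inE /=; congr (_ && _); apply/idP/idP; [exact: descS | exact: descS_bwd].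
Qed.

Lemma chS (u : sN) : ch T (val u) = map val (ch S u).
Proof.
rewrite /= map_val_pmap; apply/esym/all_filterP/allP => c Hc.
exact: desc_trans (valP u) (desc_edge Hc).
Qed.

Lemma cardS : #|{: sN}| <= #|N|.
Proof. by rewrite card_sig max_card. Qed.

Lemma cardQ : #|{: qN}| <= #|N|.
Proof. by rewrite card_sig max_card. Qed.


Lemma keep_ndesc (x : qN) : val x != v -> ~~ desc T v (val x).
Proof. by move=> xv; have := valP x; rewrite keepE (negbTE xv). Qed.

Lemma val_vt_eq (x : qN) : val x = v -> x = vt.
Proof. by move=> h; apply: val_inj. Qed.

Section Restr.
Variable O : attack N.
Variable P : attack sN.
Hypothesis HP1 : forall s, (s \in P.1) = (val s \in O.1).
Hypothesis HP2 : forall s t, ((s,t) \in P.2) = ((val s, val t) \in O.2).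

Lemma sandS x y : sand_rel S P x y = sand_rel T O (val x) (val y).
Proof.
apply/forallP/forallP.
- move=> H a; apply/forallP => a'; apply/implyP => /and4P[Ha Hb Ha' Hb'].
  have da : desc T v a.
    by move: Hb; rewrite inE => /andP[d _]; apply: desc_trans (valP x) d.
  have da' : desc T v a'.
    by move: Hb'; rewrite inE => /andP[d _]; apply: desc_trans (valP y) d.
  pose s : sN := Sub a da; pose s' : sN := Sub a' da'.
  have := H s => /forallP /(_ s') /implyP; rewrite HP2 /=; apply.
  by rewrite !HP1 !BS /= Ha Hb Ha' Hb'.
- move=> H s; apply/forallP => s'; apply/implyP => /and4P[Ha Hb Ha' Hb'].
  rewrite HP2; have := H (val s) => /forallP /(_ (val s')) /implyP; apply.
  by rewrite -!HP1 -!BS Ha Hb Ha' Hb'.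
Qed.

Lemma R1k k s : reachf S P k s = reachf T O k (val s).
Proof.
elim: k s => // k IH s; rewrite !reachf_S /rbody.
have -> : typ S s = typ T (val s) by [].
rewrite chS; case: (typ T (val s)).
- by rewrite HP1.
- by rewrite has_map; apply: eq_has => c; rewrite /preim /= IH.
- by rewrite all_map; apply: eq_all => c; rewrite /preim /= IH.
- rewrite all_map sorted_map; congr andb; first by apply: eq_all => c; rewrite /preim /= IH.
  case: (ch S s) => // c cs /=; apply: eq_path => x y; exact: sandS.
Qed.

Lemma R1 s : reaches S P s = reaches T O (val s).
Proof. by rewrite -(reaches_fuel acycS P s cardS) R1k. Qed.

End Restr.

Section Up.
Variable O : attack N.
Hypothesis HO : is_attack T O.

Definition Sx (x : qN) : {set N} :=
  if val x == v then O.1 :&: Bset T v else [set val x].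
Definition U1 : {set qN} := [set x : qN | if val x == v then reaches T O v else val x \in O.1].
Definition U2 : {set qN * qN} :=
  [set p | [&& p.1 \in U1, p.2 \in U1 &
     [forall a in Sx p.1, forall b in Sx p.2, (a,b) \in O.2]]].
Definition up : attack qN := (U1, U2).

Lemma HO1 a : a \in O.1 -> is_bas (typ T a).
Proof. by case/and4P: HO => /subsetP H _ _ _ /H; rewrite inE. Qed.
Lemma HO3 a : (a,a) \notin O.2.
Proof. by case/and4P: HO => _ _ /forallP H _; apply: H. Qed.
Lemma HO4 a b c : (a,b) \in O.2 -> (b,c) \in O.2 -> (a,c) \in O.2.
Proof.
case/and4P: HO => _ _ _ /forallP /(_ a) /forallP /(_ b) /forallP /(_ c) /implyP H h1 h2.
by apply: H; rewrite h1 h2.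
Qed.
Lemma HO2 a b : (a,b) \in O.2 -> (a \in O.1) && (b \in O.1).
Proof. by case/and4P: HO => _ /forallP /(_ (a,b)) /implyP H _ _; apply: H. Qed.

Lemma Sx_sub x a : x \in U1 -> a \in Sx x -> a \in O.1.
Proof.
rewrite /Sx inE; case: ifP => _ H; first by rewrite inE => /andP[].
by rewrite inE => /eqP ->.
Qed.

Lemma Sx_ne x : x \in U1 -> exists a, a \in Sx x.
Proof.
rewrite /Sx inE; case: ifP => _.
  by move/(reach_nonempty leafT) => [a H]; exists a; rewrite inE.
by move=> _; exists (val x); rewrite inE.
Qed.

Lemma up_attack : is_attack T' up.
Proof.
apply/and4P; split.
- apply/subsetP => x; rewrite !inE /=; case: ifP => // _; exact: HO1.
- by apply/forallP => p; apply/implyP; rewrite inE => /and3P[-> ->].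
- apply/forallP => x; apply/negP; rewrite inE => /and3P[/= Hx _ /forallP H].
  have [a Ha] := Sx_ne Hx.
  by have := H a => /implyP /(_ Ha) /forallP /(_ a) /implyP /(_ Ha); apply/negP; apply: HO3.
- apply/forallP => x; apply/forallP => y; apply/forallP => z; apply/implyP.
  rewrite !inE /= => /andP[/and3P[Hx Hy /forallP Hxy] /and3P[_ Hz /forallP Hyz]].
  rewrite Hx Hz /=; apply/forallP => a; apply/implyP => Ha; apply/forallP => c; apply/implyP => Hc.
  have [b Hb] : exists b, b \in Sx y by apply: Sx_ne; rewrite inE.
  have h1 : (a,b) \in O.2.
    by have := Hxy a => /implyP /(_ Ha) /forallP /(_ b) /implyP /(_ Hb).
  have h2 : (b,c) \in O.2.
    by have := Hyz b => /implyP /(_ Hb) /forallP /(_ c) /implyP /(_ Hc).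
  exact: HO4 h1 h2.
Qed.

Lemma SxB (x a : qN) a0 : a \in Bset T' x -> a0 \in Sx a -> a0 \in Bset T (val x).
Proof.
move=> /BQ_fwd [d b]; rewrite /Sx; case: ifP => [/eqP av|/negbT av].
  by rewrite inE => /andP[_ H]; move: d; rewrite av => d; apply: Bset_trans d H.
by rewrite inE => /eqP ->; rewrite inE d b.
Qed.

Lemma sand_up x y : sand_rel T O (val x) (val y) -> sand_rel T' up x y.
Proof.
move=> /forallP H; apply/forallP => a; apply/forallP => b; apply/implyP => /and4P[Ha Hax Hb Hby].
rewrite inE /= Ha Hb /=; apply/forallP => a0; apply/implyP => Ha0; apply/forallP => b0; apply/implyP => Hb0.
have := H a0 => /forallP /(_ b0) /implyP; apply.
by rewrite (Sx_sub Ha Ha0) (Sx_sub Hb Hb0) (SxB Hax Ha0) (SxB Hby Hb0).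
Qed.

Lemma up_reach k (u : qN) : reachf T O k (val u) -> reaches T' up u.
Proof.
elim: k u => // k IH u.
case: (val u =P v) => [uv|/eqP uv].
  move=> H; rewrite (val_vt_eq uv) (reachesE acycQ) /rbody typQv inE /= eqxx.
  by rewrite -uv; apply: (reachf_reaches acycT H).
rewrite reachf_S (reachesE acycQ) /rbody (typQ uv) (chQ uv).
case: (typ T (val u)).
- by move=> H; rewrite inE (negbTE uv).
- by rewrite has_map => /hasP [c Hc Hr]; apply/hasP; exists c => //; apply: IH.
- by rewrite all_map => /allP H; apply/allP => c Hc; apply: IH; apply: H.
- rewrite all_map sorted_map => /andP[/allP H Hs]; apply/andP; split.
    by apply/allP => c Hc; apply: IH; apply: H.
  by apply: sub_sorted Hs => x y; apply: sand_up.
Qed.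

Lemma U2P x y a b : (x,y) \in U2 -> a \in Sx x -> b \in Sx y -> (a,b) \in O.2.
Proof.
rewrite inE => /and3P[_ _ /forallP H] Ha Hb.
by have := H a => /implyP /(_ Ha) /forallP /(_ b) /implyP /(_ Hb).
Qed.

Lemma Sx_vt a : a \in O.1 -> a \in Bset T v -> a \in Sx vt.
Proof. by move=> H1 H2; rewrite /Sx eqxx inE H1 H2. Qed.

Lemma Sx_k (x : qN) : val x != v -> val x \in Sx x.
Proof. by move=> xv; rewrite /Sx (negbTE xv) inE. Qed.

Definition Pr : attack sN :=
  ([set s : sN | val s \in O.1], [set p : sN * sN | (val p.1, val p.2) \in O.2]).

Lemma Pr_attack : is_attack S Pr.
Proof.
apply/and4P; split.
- by apply/subsetP => s; rewrite !inE => /HO1.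
- by apply/forallP => p; apply/implyP; rewrite !inE => /HO2.
- by apply/forallP => s; rewrite inE /= HO3.
- apply/forallP => x; apply/forallP => y; apply/forallP => z; apply/implyP.
  by rewrite !inE /= => /andP[h1 h2]; apply: HO4 h1 h2.
Qed.

Lemma Pr_succ : reaches T O v -> successful S Pr.
Proof.
move=> rv; rewrite /successful Pr_attack /=.
rewrite (@R1 O Pr) //; by move=> *; rewrite inE.
Qed.

End Up.

Section UpTime.
Variable R : realType.
Variable d : N -> R.
Hypothesis d0 : forall a, is_bas (typ T a) -> (0 <= d a)%R.
Local Open Scope ereal_scope.
Variable O : attack N.
Hypothesis HO : is_attack T O.

Lemma up_time : attack_time (up O) (quotdur T v d) <= attack_time O (fun a => (d a)%:E).
Proof.
set dO := fun a => (d a)%:E; set dQ := quotdur T v d.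
apply: AT_le => C' /andP[HC' _].
have [HC'1 HC'2] := chainP HC'.
have dO0 : forall a, a \in O.1 -> 0 <= dO a.
  by move=> a /(HO1 HO) /d0; rewrite lee_fin.
have [D [HD [HDv Hsum]]] : exists D : {set sN}, is_chain (Pr O) D /\
    (D != set0 -> vt \in C') /\
    \sum_(x in C' :&: [set vt]) dQ x <= \sum_(s in D) dO (val s).
  case: (boolP (vt \in C')) => vC.
  - have rv : reaches T O v by have := HC'1 _ vC; rewrite inE eqxx.
    have sP := Pr_succ HO rv.
    have dS0 : forall s, s \in (Pr O).1 -> 0 <= dO (val s).
      by move=> s; rewrite inE; apply: dO0.
    have [D [/andP[HD _] HtD]] := AT_witness dS0.
    exists D; split => //; split => // .
    rewrite (setIidPr _) ?sub1set // big_set1 -HtD.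
    have -> : dQ vt = min_time S (fun y : sN => (d (val y))%:E) by rewrite /dQ /quotdur eqxx.
    exact: MT_le sP.
  - exists set0; split; first exact: chain0.
    split; first by rewrite eqxx.
    have -> : C' :&: [set vt] = set0.
      by apply/setP => x; rewrite !inE; case: (x =P vt) => [->|_]; rewrite ?(negbTE vC) ?andbF.
    by rewrite !big_set0.
have [HD1 HD2] := chainP HD.
pose C := [set val s | s in D] :|: [set val x | x in C' :\ vt].
have HC : is_chain O C.
  apply: chainI.
  - move=> a; rewrite in_setU => /orP[/imsetP[s Hs ->]|/imsetP[x Hx ->]].
      by have := HD1 _ Hs; rewrite inE.
    move: Hx; rewrite in_setD1 => /andP[xv Hx]; have := HC'1 _ Hx.
    by rewrite /= inE (negbTE (xv : val x != v)).
  - move=> a b Ha Hb ab.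
    case/setUP: Ha => /imsetP[s Hs Ea]; case/setUP: Hb => /imsetP[t Ht Eb]; subst a b.
    + have st : s != t by apply: contraNneq ab => ->.
      by have := HD2 _ _ Hs Ht st; rewrite !inE.
    + have vC : vt \in C' by apply: HDv; apply/set0Pn; exists s.
      move: Ht; rewrite in_setD1 => /andP[tv Ht].
      have sB : val s \in Bset T v.
        by rewrite inE (valP s) (HO1 HO) //; have := HD1 _ Hs; rewrite inE.
      have sO : val s \in O.1 by have := HD1 _ Hs; rewrite inE.
      have := HC'2 _ _ vC Ht; rewrite eq_sym tv => /(_ isT).
      case/orP => H.
        by rewrite (U2P H (Sx_vt sO sB) (Sx_k _ tv)).
      by rewrite (U2P H (Sx_k _ tv) (Sx_vt sO sB)) orbT.
    + have vC : vt \in C' by apply: HDv; apply/set0Pn; exists t.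
      move: Hs; rewrite in_setD1 => /andP[sv Hs].
      have sB : val t \in Bset T v.
        by rewrite inE (valP t) (HO1 HO) //; have := HD1 _ Ht; rewrite inE.
      have sO : val t \in O.1 by have := HD1 _ Ht; rewrite inE.
      have := HC'2 _ _ Hs vC sv.
      case/orP => H.
        by rewrite (U2P H (Sx_k _ sv) (Sx_vt sO sB)).
      by rewrite (U2P H (Sx_vt sO sB) (Sx_k _ sv)) orbT.
    + move: Hs Ht; rewrite !in_setD1 => /andP[sv Hs] /andP[tv Ht].
      have st : s != t by apply: contraNneq ab => ->.
      have := HC'2 _ _ Hs Ht st; case/orP => H.
        by rewrite (U2P H (Sx_k _ sv) (Sx_k _ tv)).
      by rewrite (U2P H (Sx_k _ tv) (Sx_k _ sv)) orbT.
pose Sv := [set a | desc T v a].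
have E1 : C :&: Sv = [set val s | s in D].
  apply/setP => a; rewrite in_setI in_setU [a \in Sv]inE; apply/andP/idP.
    case=> /orP[//|/imsetP[x Hx ->]] Hd.
    by move: Hx; rewrite in_setD1 => /andP[xv _]; move: (keep_ndesc xv); rewrite Hd.
  move=> H; split; first by rewrite H.
  by case/imsetP: H => s _ ->; apply: (valP s).
have E2 : C :\: Sv = [set val x | x in C' :\ vt].
  apply/setP => a; rewrite in_setD in_setU [a \in Sv]inE; apply/andP/idP.
    case=> Hd /orP[/imsetP[s _ Es]|//].
    by move: Hd; rewrite Es (valP s).
  move=> H; split; last by rewrite H orbT.
  case/imsetP: H => x Hx ->; move: Hx; rewrite in_setD1 => /andP[xv _].
  exact: keep_ndesc.
apply: le_trans (AT_ge dO0 HC).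
rewrite (big_setID [set vt]) [X in _ <= X](big_setID Sv) E1 E2 !big_imset; last 2 first.
- by move=> x y _ _; apply: val_inj.
- by move=> x y _ _; apply: val_inj.
apply: leeD => //.
rewrite le_eqVlt; apply/orP; left; apply/eqP; apply: eq_bigr => x.
rewrite in_setD1 => /andP[xv _]; by rewrite /dQ /quotdur (negbTE (xv : val x != v)).
Qed.

End UpTime.

Definition cls (a : N) : qN := insubd vt a.
Definition subd (a : N) : sN := insubd (sub_root T v) a.

Lemma cls_v a : desc T v a -> cls a = vt.
Proof.
move=> da; apply: val_inj; rewrite val_insubd; case: ifP => // ka.
by rewrite (keep_desc ka da).
Qed.

Lemma cls_k a : ~~ desc T v a -> val (cls a) = a.
Proof. by move=> da; rewrite val_insubd keepE da orbT. Qed.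

Lemma cls_val (x : qN) : cls (val x) = x.
Proof. exact: valKd. Qed.

Lemma subd_val (s : sN) : subd (val s) = s.
Proof. exact: valKd. Qed.

Lemma typS (s : sN) : typ S s = typ T (val s).
Proof. by []. Qed.

Section Down.
Variable O' : attack qN.
Variable P : attack sN.
Hypothesis HO' : is_attack T' O'.
Hypothesis HP : is_attack S P.
Hypothesis HPv : vt \in O'.1 -> successful S P.
Hypothesis HP0 : vt \notin O'.1 -> P.1 = set0.

Definition D1 : {set N} :=
  [set a | if desc T v a then subd a \in P.1 else cls a \in O'.1].
Definition D2 : {set N * N} :=
  [set p | [&& p.1 \in D1, p.2 \in D1 &
     if desc T v p.1 && desc T v p.2 then (subd p.1, subd p.2) \in P.2
     else (cls p.1, cls p.2) \in O'.2]].
Definition down : attack N := (D1, D2).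

Lemma F1 a : a \in D1 -> desc T v a -> vt \in O'.1.
Proof.
rewrite inE => + da; rewrite da => Ha; apply/negPn/negP => /HP0 H.
by move: Ha; rewrite H inE.
Qed.

Lemma F2 a : a \in D1 -> cls a \in O'.1.
Proof.
move=> Ha; case: (boolP (desc T v a)) => da; first by rewrite (cls_v da) (F1 Ha da).
by move: Ha; rewrite inE (negbTE da).
Qed.

Lemma F3 a b : (a,b) \in D2 -> ~~ (desc T v a && desc T v b) -> (cls a, cls b) \in O'.2.
Proof. by rewrite inE /= => /and3P[_ _] + /negbTE H; rewrite H. Qed.

Lemma down_attack : is_attack T down.
Proof.
apply/and4P; split.
- apply/subsetP => a Ha; rewrite inE; move: (Ha); rewrite inE /=.
  case: (boolP (desc T v a)) => da.
    by move/(att1 HP); rewrite typS val_insubd da.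
  move/(att1 HO'); rewrite typQ; first by rewrite cls_k.
  by rewrite cls_k //; apply: contraNneq da => ->; apply: desc_refl.
- by apply/forallP => p; apply/implyP; rewrite inE => /and3P[-> ->].
- apply/forallP => a; apply/negP; rewrite inE /= => /and3P[_ _].
  by rewrite andbb; case: ifP => _; [move/negP: (att3 HP (subd a)) | move/negP: (att3 HO' (cls a))].
- apply/forallP => a; apply/forallP => b; apply/forallP => c; apply/implyP => /andP[Hab Hbc].
  have Hab' := Hab; have Hbc' := Hbc.
  move: Hab' Hbc'; rewrite !inE /= => /and3P[Ha Hb Hab2] /and3P[_ Hc Hbc2].
  rewrite Ha Hc /=.
  move: Hab2 Hbc2; case da: (desc T v a); case db: (desc T v b);
    case dc: (desc T v c) => /= Hab2 Hbc2.
  + exact: (att4 HP Hab2 Hbc2).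
  + by rewrite (cls_v da) -(cls_v db).
  + have := att4 HO' Hab2 Hbc2; rewrite (cls_v da) (cls_v dc).
    by move/negP: (att3 HO' vt).
  + exact: (att4 HO' Hab2 Hbc2).
  + by rewrite (cls_v dc) -(cls_v db).
  + exact: (att4 HO' Hab2 Hbc2).
  + exact: (att4 HO' Hab2 Hbc2).
  + exact: (att4 HO' Hab2 Hbc2).
Qed.

Lemma HP1d s : (s \in P.1) = (val s \in D1).
Proof. by rewrite inE (valP s) subd_val. Qed.

Lemma HP2d s t : ((s,t) \in P.2) = ((val s, val t) \in D2).
Proof.
rewrite inE /= (valP s) (valP t) !subd_val /= -!HP1d.
by apply/idP/idP => [H|/and3P[]//]; rewrite H andbT; exact: (att2 HP H).
Qed.

Lemma clsB (x : qN) a0 : a0 \in Bset T (val x) -> cls a0 \in Bset T' x.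
Proof.
move=> H; have := H; rewrite inE => /andP[dx b].
case: (boolP (desc T v a0)) => da.
  rewrite (cls_v da); apply: BQ_bwd; last by rewrite val_vt eqxx.
  exact: entry (valP x) dx da.
by apply: BQ_bwd; rewrite cls_k.
Qed.

Lemma sand_down x y : sand_rel T' O' x y -> sand_rel T down (val x) (val y).
Proof.
move=> /forallP H; apply/forallP => a0; apply/forallP => b0; apply/implyP => /and4P[Ha Hax Hb Hby].
have Hc : (cls a0, cls b0) \in O'.2.
  have := H (cls a0) => /forallP /(_ (cls b0)) /implyP; apply.
  by rewrite (F2 Ha) (F2 Hb) (clsB Hax) (clsB Hby).
rewrite inE /= Ha Hb /=; case: ifP => // /andP[da db].
by move: Hc; rewrite (cls_v da) (cls_v db); move/negP: (att3 HO' vt).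
Qed.

Lemma down_reach k (u : qN) : reachf T' O' k u -> reaches T down (val u).
Proof.
elim: k u => // k IH u.
case: (val u =P v) => [uv|/eqP uv].
  rewrite (val_vt_eq uv) reachf_S /rbody typQv => /HPv /andP[_ H].
  by move: H; rewrite (R1 (O:=down) HP1d HP2d).
rewrite reachf_S (reachesE acycT) /rbody (typQ uv) (chQ uv).
case: (typ T (val u)).
- by move=> H; rewrite inE (negbTE (keep_ndesc uv)) cls_val.
- by rewrite has_map => /hasP [c Hc Hr]; apply/hasP; exists c => //; apply: IH.
- by rewrite all_map => /allP H; apply/allP => c Hc; apply: IH; apply: H.
- rewrite all_map sorted_map => /andP[/allP H Hs]; apply/andP; split.
    by apply/allP => c Hc; apply: IH; apply: H.
  by apply: sub_sorted Hs => x y; apply: sand_down.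
Qed.

End Down.

Section DownTime.
Variable R : realType.
Variable d : N -> R.
Hypothesis d0 : forall a, is_bas (typ T a) -> (0 <= d a)%R.
Local Open Scope ereal_scope.
Variable O' : attack qN.
Variable P : attack sN.
Hypothesis HO' : is_attack T' O'.
Hypothesis HP : is_attack S P.
Hypothesis HPv : vt \in O'.1 -> successful S P.
Hypothesis HP0 : vt \notin O'.1 -> P.1 = set0.
Hypothesis HPt : vt \in O'.1 ->
  attack_time P (fun y : sN => (d (val y))%:E) <= min_time S (fun y : sN => (d (val y))%:E).

Lemma mtS_ge0 : 0 <= min_time S (fun y : sN => (d (val y))%:E).
Proof. by apply: MT_nonneg => a; rewrite typS lee_fin; apply: d0. Qed.

Lemma dQ0 x : x \in O'.1 -> 0 <= quotdur T v d x.
Proof.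
move=> Hx; rewrite /quotdur; case: ifP => xv; first exact: mtS_ge0.
by rewrite lee_fin; apply: d0; rewrite -typQ ?xv //; apply: (att1 HO').
Qed.

Lemma down_time :
  attack_time (down O' P) (fun a => (d a)%:E) <= attack_time O' (quotdur T v d).
Proof.
set dO := fun a => (d a)%:E; set dQ := quotdur T v d; set dS := fun y : sN => (d (val y))%:E.
apply: AT_le => C /andP[HC _]; have [HC1 HC2] := chainP HC.
pose D := [set s : sN | val s \in C].
pose E := [set x : qN | if val x == v then [exists a in C, desc T v a] else val x \in C].
have inD1 a : a \in C -> a \in D1 O' P by move/HC1.
have HD : is_chain P D.
  apply: chainI => [s|s t]; rewrite !inE.
    by move/inD1; rewrite inE (valP s) subd_val.
  move=> Hs Ht st; have := HC2 _ _ Hs Ht (contra_neq (@val_inj _ _ _ s t) st).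
  by rewrite !(HP2d O' HP).
have rep x : x \in E -> exists2 a, a \in C & cls a = x.
  rewrite inE; case: ifP => [xv /existsP[a /andP[Ha da]]|xv Hx].
    by exists a => //; rewrite (cls_v da); apply/esym/val_vt_eq/eqP.
  by exists (val x) => //; rewrite cls_val.
have HE : is_chain O' E.
  apply: chainI => [x /rep [a Ha <-]|x y /rep [a Ha <-] /rep [b Hb <-] xy].
    exact: (F2 HP0) (inD1 _ Ha).
  have ab : a != b by apply: contraNneq xy => ->.
  have nd : ~~ (desc T v a && desc T v b).
    by apply/negP => /andP[da db]; move: xy; rewrite (cls_v da) (cls_v db) eqxx.
  by case/orP: (HC2 _ _ Ha Hb ab) => H; rewrite (F3 H) ?orbT // andbC.
have dO0 : forall a, a \in (down O' P).1 -> 0 <= dO a.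
  by move=> a /(att1 (down_attack HO' HP)) /d0; rewrite lee_fin.
have dS0 : forall s, s \in P.1 -> 0 <= dS s.
  by move=> s /(att1 HP); rewrite typS lee_fin; apply: d0.
pose Sv := [set a | desc T v a].
have E1 : C :&: Sv = [set val s | s in D].
  apply/setP => a; rewrite in_setI [a \in Sv]inE; apply/andP/idP.
    by case=> Ha da; apply/imsetP; exists (Sub a da) => //; rewrite inE.
  by case/imsetP => s; rewrite inE => Hs ->; split => //; apply: (valP s).
have E2 : C :\: Sv = [set val x | x in E :\ vt].
  apply/setP => a; rewrite in_setD [a \in Sv]inE; apply/andP/idP.
    case=> da Ha; apply/imsetP; exists (cls a); last by rewrite cls_k.
    rewrite in_setD1 inE; have ka := cls_k da.
    have av : (val (cls a) == v) = false.
      by rewrite ka; apply/negbTE; apply: contraNneq da => ->; apply: desc_refl.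
    by rewrite (_ : (cls a != vt) = true) ?av ?ka //; apply/negbT; exact: av.
  case/imsetP => x; rewrite in_setD1 inE => /andP[xv Hx] ->.
  have xv' : (val x == v) = false by apply: negbTE.
  by rewrite xv' in Hx; rewrite Hx (keep_ndesc (negbT xv')).
apply: le_trans (AT_ge (dQ0) HE).
rewrite (big_setID Sv) [X in _ <= X](big_setID [set vt]) E1 E2 !big_imset; last 2 first.
- by move=> x y _ _; apply: val_inj.
- by move=> x y _ _; apply: val_inj.
apply: leeD; last first.
  rewrite le_eqVlt; apply/orP; left; apply/eqP; apply: eq_bigr => x.
  by rewrite in_setD1 => /andP[xv _]; rewrite /dQ /quotdur (negbTE (xv : val x != v)).
case: (set_0Vmem D) => [->|[s Hs]].
  rewrite big_set0; apply: sume_ge0 => x; rewrite in_setI => /andP[Hx _].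
  by apply: dQ0; have := chainP HE => -[+ _]; apply.
have vE : vt \in E.
  by rewrite inE eqxx; apply/existsP; exists (val s); rewrite (valP s) andbT; move: Hs; rewrite inE.
have vO : vt \in O'.1 by have := chainP HE => -[+ _]; apply.
rewrite (setIidPr _) ?sub1set // big_set1.
have -> : quotdur T v d vt = min_time S dS by rewrite /quotdur eqxx.
exact: le_trans (AT_ge dS0 HD) (HPt vO).
Qed.

End DownTime.

End Graph.

Unset Implicit Arguments. Set Strict Implicit. Set Printing Implicit Defensive.

Theorem mainTheorem9 (R : realType) (N : finType) (T : dat N) (d : N -> R) (v : N) :
  wf_dat T ->
  (forall a, is_bas (typ T a) -> (0 <= d a)%R) ->
  is_module T v ->
  min_time T (fun a => (d a)%:E) = min_time (quotdat T v) (quotdur T v d).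
Proof.
move=> wf d0 modv.
set vt := vtilde T v.
set dS := fun y : subN T v => (d (val y))%:E.
have kr : keep T v (Defs.root T).
  rewrite keepE; case: (boolP (desc T v (Defs.root T))) => H //=; last by rewrite orbT.
  by rewrite orbF; apply/eqP; exact: (desc_antisym (acycT wf) (rootT wf v) H).
have vr : val (insubd vt (Defs.root T) : quotN T v) = Defs.root T by rewrite insubdK.
apply/le_anti/andP; split.
- apply: MT_ge => O' /andP[HO' rO'].
  have dQ0' := dQ0 d0 HO'.
  case: (boolP ((vt \in O'.1) && (min_time (subdat T v) dS == +oo%E))).
    case/andP=> vO /eqP Hinf.
    have ch1 : is_chain O' [set vt].
      apply: chainI => [a|a b]; first by rewrite inE => /eqP ->.
      by rewrite !inE => /eqP -> /eqP ->; rewrite eqxx.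
    have := AT_ge dQ0' ch1; rewrite big_set1 /quotdur eqxx.
    rewrite /dS in Hinf; rewrite Hinf leye_eq => /eqP ->; exact: leey.
  move=> Hn.
  have [P [HP HPv HP0 HPt]] : exists P : attack (subN T v),
     [/\ is_attack (subdat T v) P, (vt \in O'.1 -> successful (subdat T v) P),
         (vt \notin O'.1 -> P.1 = set0) &
         (vt \in O'.1 -> (attack_time P dS <= min_time (subdat T v) dS)%E)].
    case: (boolP (vt \in O'.1)) => vO.
      rewrite vO /= in Hn.
      have [P [sP HtP]] := MT_witness Hn.
      exists P; split => //; first by case/andP: sP.
      by move=> _; rewrite HtP.
    exists (set0, set0); split => //.
    apply/and4P; split.
    + exact: sub0set.
    + by apply/forallP => p; rewrite inE.
    + by apply/forallP => p; rewrite inE.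
    + by apply/forallP => a; apply/forallP => b; apply/forallP => c; rewrite inE.
  have HD := down_attack HO' HP.
  have sD : successful T (down O' P).
    rewrite /successful HD /=.
    have := down_reach wf modv HO' HP HPv HP0 rO'; by rewrite vr.
  apply: le_trans (MT_le _ sD) _.
  exact: (down_time d0 HO' HP HP0 HPt).
- apply: MT_ge => O /andP[HO rO].
  have sU : successful (quotdat T v) (up T v O).
    rewrite /successful up_attack //=.
    by apply: (up_reach wf modv (k := #|N|)); rewrite vr.
  exact: (le_trans (MT_le _ sU) (up_time v wf d0 HO)).
Qed.
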